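(* There exist absolute constants $0<c\le C$ such that for all integers $1\le m\le n$, $$n!\left(\frac{c}{m}\max\Big\{1,\log\frac nm\Big\}\right)^m\le|s(n+1,m+1)|\le n!\left(\frac{C}{m}\max\Big\{1,\log\frac nm\Big\}\right)^m.$$
   Context: $s(a,b)$ denote the Stirling numbers of the first kind, defined by $x(x-1)\cdots(x-a+1)=\sum_{b=1}^{a}s(a,b)x^b$. Logarithms are natural. *)

(* Defs.v *)
From mathcomp Require Import all_boot all_order all_algebra.
From Stdlib Require Import Reals.
Set Implicit Arguments. Unset Strict Implicit. Unset Printing Implicit Defensive.
Import GRing.Theory.
Local Open Scope ring_scope.

Definition falling_poly (a : nat) : {poly int} :=
  \prod_(i < a) ('X - (i%:Z)%:P).

Definition stirling1 (a b : nat) : int := (falling_poly a)`_b.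

Definition abs_stirling1R (a b : nat) : R := INR (absz (stirling1 a b)).

(* Main.v *)
Require Import Defs.
From mathcomp Require Import all_boot all_order all_algebra.
From Stdlib Require Import Reals.
Import GRing.Theory.

Fixpoint us (a b : nat) : nat :=
  match a, b with
  | O, O => 1
  | O, S _ => 0
  | S a', O => a' * us a' 0
  | S a', S b' => us a' b' + a' * us a' b'.+1
  end.

Section Link.
Local Open Scope ring_scope.

Lemma stirling_S a b : stirling1 a.+1 b =
  (if b is b'.+1 then stirling1 a b' else 0) - stirling1 a b * (a%:Z).
Proof.
  rewrite /stirling1 /falling_poly big_ord_recr /= -/(falling_poly a).
  rewrite mulrBr coefB coefMX coefMC. by case: b.
Qed.

Lemma stirling_u a b : stirling1 a b = (-1) ^+ (a + b) * (us a b)%:Z.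
Proof.
  elim: a b => [|a IH] b.
  - rewrite /stirling1 /falling_poly big_ord0 coef1. by case: b => [|b] /=; rewrite ?mulr1 ?mulr0.
  - rewrite stirling_S. case: b => [|b].
    + rewrite IH /= PoszM addn0 addSn exprS addn0 sub0r !mulN1r mulNr.
      congr (- _). rewrite -mulrA; congr (_ * _); exact: mulrC.
    + rewrite !IH /= PoszD PoszM addSn addnS !exprS !mulN1r opprK !mulNr opprK mulrDr.
      congr (_ + _). rewrite -mulrA; congr (_ * _); exact: mulrC.
Qed.
End Link.

Lemma abs_us a b : abs_stirling1R a b = INR (us a b).
Proof. by rewrite /abs_stirling1R stirling_u abszMsign. Qed.
From Stdlib Require Import Reals Lra Lia ZArith.
From mathcomp Require Import zify.
Open Scope R_scope.

Fixpoint Eh (n m : nat) : R :=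
  match n with
  | O => match m with O => 1 | S _ => 0 end
  | S n' => match m with O => Eh n' O | S m' => Eh n' m + Eh n' m' / INR n end
  end.
Fixpoint Bp (t : R) (n : nat) : R :=
  match n with O => 1 | S k => Bp t k * (1 + t / INR n) end.
Fixpoint Hh (n : nat) : R := match n with O => 0 | S k => Hh k + / INR n end.

Lemma Eh_S0 n : Eh (S n) 0 = Eh n 0. Proof. reflexivity. Qed.
Lemma Eh_SS n m : Eh (S n) (S m) = Eh n (S m) + Eh n m / INR (S n).
Proof. reflexivity. Qed.
Lemma Bp_S t n : Bp t (S n) = Bp t n * (1 + t / INR (S n)). Proof. reflexivity. Qed.
Lemma Hh_S n : Hh (S n) = Hh n + / INR (S n). Proof. reflexivity. Qed.

Lemma INR_Spos n : 0 < INR (S n).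
Proof. apply lt_0_INR; lia. Qed.

Lemma Eh0 n : Eh n 0 = 1.
Proof. induction n as [|n IH]; [reflexivity| rewrite Eh_S0; exact IH]. Qed.

Lemma Eh_nonneg n m : 0 <= Eh n m.
Proof.
  revert m; induction n as [|n IH]; intros [|m].
  - simpl; lra.
  - simpl; lra.
  - rewrite Eh_S0; apply IH.
  - rewrite Eh_SS. apply Rplus_le_le_0_compat; [apply IH|].
    unfold Rdiv; apply Rmult_le_pos; [apply IH|].
    left; apply Rinv_0_lt_compat, INR_Spos.
Qed.

Lemma Eh_zero n m : (n < m)%coq_nat -> Eh n m = 0.
Proof.
  revert m; induction n as [|n IH]; intros [|m] H; try lia.
  - reflexivity.
  - rewrite Eh_SS IH; [|lia]. rewrite IH; [|lia]. unfold Rdiv; ring.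
Qed.

Lemma Eh_mono n m : Eh n m <= Eh (S n) m.
Proof.
  destruct m as [|m]; [rewrite Eh_S0; lra|].
  rewrite Eh_SS. have : 0 <= Eh n m / INR (S n).
  { unfold Rdiv; apply Rmult_le_pos; [apply Eh_nonneg|].
    left; apply Rinv_0_lt_compat, INR_Spos. }
  lra.
Qed.

Lemma Eh_mono_le n' n m : (n' <= n)%coq_nat -> Eh n' m <= Eh n m.
Proof.
  induction n as [|n IH]; intros H.
  - have -> : n' = O by lia. lra.
  - destruct (Nat.eq_dec n' (S n)) as [->|Hne]; [lra|].
    apply Rle_trans with (Eh n m); [apply IH; lia| apply Eh_mono].
Qed.

Lemma Eh_diag n : 1 <= Eh n n * INR n ^ n.
Proof.
  induction n as [|n IH]; [simpl; lra|].
  rewrite Eh_SS Eh_zero; [|lia].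
  have Hp := INR_Spos n.
  have -> : (0 + Eh n n / INR (S n)) * INR (S n) ^ S n = Eh n n * INR (S n) ^ n.
  { cbn [pow]. field. lra. }
  apply Rle_trans with (1 := IH).
  apply Rmult_le_compat_l; [apply Eh_nonneg|].
  apply pow_incr; split; [apply pos_INR|]. apply le_INR; lia.
Qed.

Lemma Bp_ge1 t n : 0 <= t -> 1 <= Bp t n.
Proof.
  intros Ht; induction n as [|n IH]; [simpl; lra|].
  rewrite Bp_S. have : 0 <= t / INR (S n).
  { unfold Rdiv; apply Rmult_le_pos; [lra|]. left; apply Rinv_0_lt_compat, INR_Spos. }
  intros; nra.
Qed.

Lemma Eh_upper t n m : 0 < t -> Eh n m * t ^ m <= Bp t n.
Proof.
  intros Ht; revert m; induction n as [|n IH]; intros [|m].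
  - simpl; lra.
  - simpl. have := pow_lt t m Ht. intros; nra.
  - rewrite Eh0; simpl pow. have := Bp_ge1 t (S n). lra.
  - rewrite Eh_SS Bp_S.
    have H1 := IH (S m). have H2 := IH m.
    have Hp := INR_Spos n.
    have -> : (Eh n (S m) + Eh n m / INR (S n)) * t ^ S m =
       Eh n (S m) * t ^ S m + (Eh n m * t ^ m) * (t / INR (S n)).
    { cbn [pow]. field. lra. }
    have Hq : 0 <= t / INR (S n).
    { unfold Rdiv; apply Rmult_le_pos; [lra|]. left; apply Rinv_0_lt_compat, INR_Spos. }
    have : (Eh n m * t ^ m) * (t / INR (S n)) <= Bp t n * (t / INR (S n)).
    { apply Rmult_le_compat_r; auto. }
    nra.
Qed.
Lemma ln_le' x y : 0 < x -> x <= y -> ln x <= ln y.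
Proof. intros Hx [H|H]; [left; apply ln_increasing; auto| subst; lra]. Qed.

Lemma exp_le' x y : x <= y -> exp x <= exp y.
Proof. intros [H|H]; [left; apply exp_increasing; auto| subst; lra]. Qed.

Lemma ln_le_sub1 x : 0 < x -> ln x <= x - 1.
Proof.
  intros Hx. have H := exp_ineq1_le (x - 1).
  rewrite -(ln_exp (x - 1)). apply ln_le'; lra.
Qed.

Lemma exp_pow x k : exp x ^ k = exp (INR k * x).
Proof.
  induction k as [|k IH].
  - simpl. rewrite Rmult_0_l exp_0. reflexivity.
  - cbn [pow]. rewrite IH S_INR -exp_plus. f_equal. ring.
Qed.

Lemma floor_ex y : 0 <= y -> exists w : nat, INR w <= y < INR w + 1.
Proof.
  intros Hy. destruct (archimed y) as [H1 H2].
  have Hpos : (0 < up y)%Z by apply lt_0_IZR; lra.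
  exists (Z.to_nat (up y - 1)).
  rewrite INR_IZR_INZ Z2Nat.id; [|lia]. rewrite minus_IZR.
  change (IZR 1) with 1. lra.
Qed.

Lemma step_ln n : (1 <= n)%coq_nat -> / INR (S n) <= ln (INR (S n)) - ln (INR n).
Proof.
  intros Hn. have Hp : 0 < INR n by apply lt_0_INR; lia.
  have Hp1 := INR_Spos n.
  have H := ln_le_sub1 (INR n / INR (S n)) ltac:(apply Rdiv_lt_0_compat; lra).
  unfold Rdiv in H. rewrite ln_mult in H; [|lra|apply Rinv_0_lt_compat; lra].
  rewrite ln_Rinv in H; [|lra].
  have E : INR n * / INR (S n) - 1 = - / INR (S n).
  { rewrite S_INR in Hp1 *. field. lra. }
  rewrite E in H. lra.
Qed.

Lemma step_ln_up n : (1 <= n)%coq_nat -> ln (INR (S n)) - ln (INR n) <= / INR n.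
Proof.
  intros Hn. have Hp : 0 < INR n by apply lt_0_INR; lia.
  have Hp1 := INR_Spos n.
  have H := ln_le_sub1 (INR (S n) / INR n) ltac:(apply Rdiv_lt_0_compat; lra).
  unfold Rdiv in H. rewrite ln_mult in H; [|lra|apply Rinv_0_lt_compat; lra].
  rewrite ln_Rinv in H; [|lra].
  have E : INR (S n) * / INR n - 1 = / INR n.
  { rewrite S_INR. field. lra. }
  rewrite E in H. lra.
Qed.

Lemma ln_harm a d : ln (INR (a + d) + 1) - ln (INR a + 1) <= Hh (a + d) - Hh a.
Proof.
  induction d as [|d IH].
  - rewrite addn0. lra.
  - rewrite addnS Hh_S.
    have H := step_ln_up (S (a + d)) ltac:(lia).
    rewrite -!S_INR in IH *. lra.
Qed.

Lemma Eh_block n' d j : Eh n' j * (Hh (n' + d) - Hh n') <= Eh (n' + d) (S j).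
Proof.
  induction d as [|d IH].
  - rewrite addn0. have := Eh_nonneg n' (S j). nra.
  - rewrite addnS Hh_S Eh_SS.
    have Hm := Eh_mono_le n' (n' + d) j ltac:(lia).
    have Hp := INR_Spos (n' + d).
    have H0 := Eh_nonneg n' j.
    have : Eh n' j / INR (S (n' + d)) <= Eh (n' + d) j / INR (S (n' + d)).
    { unfold Rdiv; apply Rmult_le_compat_r; [left; apply Rinv_0_lt_compat; lra| lra]. }
    have -> : Eh n' j * (Hh (n' + d) + / INR (S (n' + d)) - Hh n') =
      Eh n' j * (Hh (n' + d) - Hh n') + Eh n' j / INR (S (n' + d)) by (unfold Rdiv; ring).
    lra.
Qed.

Lemma Bp_small t m n : 0 <= t <= INR m -> (n <= m)%coq_nat ->
  Bp t n * INR (fact n) <= (2 * INR m) ^ n.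
Proof.
  intros Ht; induction n as [|n IH]; intros Hn.
  - simpl; lra.
  - rewrite Bp_S. cbn [fact pow].
    have Hp := INR_Spos n. have Hle : INR (S n) <= INR m by apply le_INR.
    rewrite mult_INR.
    have -> : Bp t n * (1 + t / INR (S n)) * (INR (S n) * INR (fact n)) =
        (Bp t n * INR (fact n)) * (INR (S n) + t) by (field; lra).
    have := IH ltac:(lia). have := Bp_ge1 t n ltac:(lra).
    have : 0 < INR (fact n) by apply lt_0_INR, lt_O_fact.
    intros. apply Rle_trans with ((2 * INR m) ^ n * (INR (S n) + t)).
    + apply Rmult_le_compat_r; lra.
    + rewrite Rmult_comm. apply Rmult_le_compat_r; [apply pow_le; have := pos_INR m; lra| lra].
Qed.

Lemma succ_pow_le m : INR (S m) ^ m <= exp 1 * INR m ^ m.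
Proof.
  destruct m as [|m]; [simpl; have := exp_ineq1_le 1; lra|].
  have Hp := INR_Spos m.
  have -> : INR (S (S m)) = INR (S m) * (1 + / INR (S m)).
  { rewrite (S_INR (S m)). field. lra. }
  rewrite Rpow_mult_distr Rmult_comm.
  apply Rmult_le_compat_r; [apply pow_le; lra|].
  apply Rle_trans with (exp (/ INR (S m)) ^ S m).
  - apply pow_incr. split; [have : 0 < / INR (S m) by apply Rinv_0_lt_compat; lra| ]; try lra.
    apply exp_ineq1_le.
  - rewrite exp_pow. have -> : INR (S m) * / INR (S m) = 1 by field; lra. lra.
Qed.

Lemma pow_fact m : INR m ^ m <= exp 1 ^ m * INR (fact m).
Proof.
  induction m as [|m IH]; [simpl; lra|].
  cbn [fact]. rewrite mult_INR.
  have H := succ_pow_le m. have Hp := INR_Spos m.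
  have He : 0 < exp 1 by apply exp_pos.
  have -> : INR (S m) ^ S m = INR (S m) * INR (S m) ^ m by reflexivity.
  have -> : exp 1 ^ S m * (INR (S m) * INR (fact m)) = INR (S m) * (exp 1 * (exp 1 ^ m * INR (fact m))) by (cbn [pow]; ring).
  apply Rmult_le_compat_l; [lra|].
  apply Rle_trans with (1 := H). apply Rmult_le_compat_l; lra.
Qed.

Lemma Bp_large t m d : 0 <= t -> (1 <= m)%coq_nat ->
  Bp t (m + d) <= Bp t m * exp (t * (ln (INR (m + d)) - ln (INR m))).
Proof.
  intros Ht Hm. induction d as [|d IH].
  - rewrite addn0. have -> : t * (ln (INR m) - ln (INR m)) = 0 by ring.
    rewrite exp_0. lra.
  - rewrite addnS Bp_S.
    have Hs := step_ln (m + d) ltac:(lia).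
    have Hp := INR_Spos (m + d).
    have H1 : 1 + t / INR (S (m + d)) <= exp (t * (ln (INR (S (m + d))) - ln (INR (m + d)))).
    { apply Rle_trans with (exp (t / INR (S (m + d)))); [apply exp_ineq1_le|].
      apply exp_le'. unfold Rdiv. apply Rmult_le_compat_l; lra. }
    have -> : t * (ln (INR (S (m + d))) - ln (INR m)) =
      t * (ln (INR (m + d)) - ln (INR m)) + t * (ln (INR (S (m + d))) - ln (INR (m + d))) by ring.
    rewrite exp_plus -Rmult_assoc.
    have := Bp_ge1 t (m + d) Ht.
    have : 0 <= t / INR (S (m + d)) by (unfold Rdiv; apply Rmult_le_pos; [lra| left; apply Rinv_0_lt_compat; lra]).
    intros. apply Rmult_le_compat; lra.
Qed.

Lemma lower_big m n : (1 <= m)%coq_nat -> (m <= n)%coq_nat -> 2 <= ln (INR n / INR m) ->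
  (ln (INR n / INR m) / (2 * INR m)) ^ m <= Eh n m.
Proof.
  intros Hm Hmn HL. set L := ln (INR n / INR m) in HL *.
  have Hmp : 0 < INR m by apply lt_0_INR; lia.
  have Hnp : 0 < INR n by apply lt_0_INR; lia.
  set r := exp (L / INR m).
  have Hr : 1 <= r.
  { have := exp_ineq1_le (L / INR m). have : 0 <= L / INR m.
    { unfold Rdiv; apply Rmult_le_pos; [lra| left; apply Rinv_0_lt_compat; lra]. }
    unfold r; lra. }
  have Hq : 0 <= L / (2 * INR m).
  { unfold Rdiv; apply Rmult_le_pos; [lra| left; apply Rinv_0_lt_compat; lra]. }
  have claim : forall j, exists a, (m <= a)%coq_nat /\ INR a <= INR m * r ^ j /\
                   (L / (2 * INR m)) ^ j <= Eh a j.
  { induction j as [|j IH].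
    - exists m. split; [lia|]. split; [simpl; lra|]. rewrite Eh0. simpl; lra.
    - destruct IH as [a [Ha [Har HE]]].
      have Hap : 0 < INR a by apply lt_0_INR; lia.
      have Hle_am : INR m <= INR a by apply le_INR.
      destruct (floor_ex (INR a * (r - 1))) as [w Hw]; [apply Rmult_le_pos; lra|].
      exists (a + w)%nat. split; [lia|].
      rewrite plus_INR. split.
      + cbn [pow]. have Hrj : 0 <= r ^ j by apply pow_le; lra.
        apply Rle_trans with (INR a * r); [nra|].
        have : INR a * r <= INR m * r ^ j * r by apply Rmult_le_compat_r; lra.
        lra.
      + have Hhar := ln_harm a w. have Hb := Eh_block a w j.
        have Hstep : L / (2 * INR m) <= ln (INR (a + w) + 1) - ln (INR a + 1).
        { have H1 : ln (INR a * r) <= ln (INR (a + w) + 1).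
          { apply ln_le'; [apply Rmult_lt_0_compat; lra|]. rewrite plus_INR. nra. }
          rewrite ln_mult in H1; [|lra|unfold r; apply exp_pos].
          unfold r in H1. rewrite ln_exp in H1.
          have H2 := step_ln_up a ltac:(lia). rewrite S_INR in H2.
          have H3 : / INR a <= / INR m by apply Rinv_le_contravar.
          have H4 : 0 < / INR m by apply Rinv_0_lt_compat.
          have -> : L / (2 * INR m) = L * / INR m / 2 by (field; lra).
          have E1 : L / INR m = L * / INR m by (unfold Rdiv; ring).
          rewrite E1 in H1.
          nra. }
        cbn [pow]. rewrite Rmult_comm.
        apply Rle_trans with (Eh a j * (Hh (a + w) - Hh a)); [|exact Hb].
        apply Rmult_le_compat; [apply pow_le; lra| lra| exact HE| lra]. }
  destruct (claim m) as [a [Ha [Har HE]]].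
  have Hrm : r ^ m = INR n / INR m.
  { unfold r. rewrite exp_pow. have -> : INR m * (L / INR m) = L by (field; lra).
    unfold L. rewrite exp_ln; [reflexivity|]. apply Rdiv_lt_0_compat; lra. }
  rewrite Hrm in Har. have : INR a <= INR n.
  { have -> : INR n = INR m * (INR n / INR m) by (field; lra). exact Har. }
  intros Han. apply INR_le in Han.
  apply Rle_trans with (1 := HE). apply Eh_mono_le; exact Han.
Qed.

Lemma lower_all m n : (1 <= m)%coq_nat -> (m <= n)%coq_nat ->
  (1 / 2 / INR m * Rmax 1 (ln (INR n / INR m))) ^ m <= Eh n m.
Proof.
  intros Hm Hmn.
  have Hmp : 0 < INR m by apply lt_0_INR; lia.
  destruct (Rle_dec 2 (ln (INR n / INR m))) as [HL|HL].
  - rewrite Rmax_right; [|lra].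
    have -> : 1 / 2 / INR m * ln (INR n / INR m) = ln (INR n / INR m) / (2 * INR m) by (field; lra).
    apply lower_big; auto.
  - apply Rle_trans with ((/ INR m) ^ m).
    + apply pow_incr. have H1 := Rmax_l 1 (ln (INR n / INR m)).
      have H2 : Rmax 1 (ln (INR n / INR m)) <= 2.
      { apply Rmax_lub; lra. }
      have H4 : 0 < / INR m by apply Rinv_0_lt_compat.
      have -> : 1 / 2 / INR m = / INR m / 2 by (field; lra).
      split; nra.
    + apply Rle_trans with (Eh m m); [|apply Eh_mono_le; auto].
      have Hd := Eh_diag m.
      have Hpm : 0 < INR m ^ m by apply pow_lt.
      have Hinv : (/ INR m) ^ m * INR m ^ m = 1.
      { rewrite -Rpow_mult_distr Rinv_l; [apply pow1| lra]. }
      have Hpi : 0 <= (/ INR m) ^ m by apply pow_le; left; apply Rinv_0_lt_compat.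
      nra.
Qed.

Lemma upper_all m n : (1 <= m)%coq_nat -> (m <= n)%coq_nat ->
  Eh n m <= (2 * exp 1 * exp 1 / INR m * Rmax 1 (ln (INR n / INR m))) ^ m.
Proof.
  intros Hm Hmn.
  have Hmp : 0 < INR m by apply lt_0_INR; lia.
  have Hnp : 0 < INR n by apply lt_0_INR; lia.
  set Lam := Rmax 1 (ln (INR n / INR m)).
  have HL1 : 1 <= Lam by apply Rmax_l.
  have HL2 : ln (INR n / INR m) <= Lam by apply Rmax_r.
  set t := INR m / Lam.
  have Ht : 0 < t by (apply Rdiv_lt_0_compat; lra).
  have Htm : t <= INR m.
  { unfold t. apply (Rmult_le_reg_r Lam); [lra|]. unfold Rdiv. rewrite Rmult_assoc Rinv_l; nra. }
  have He : 0 < exp 1 by apply exp_pos.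
  have H1 := Eh_upper t n m Ht.
  destruct (Nat.le_exists_sub m n Hmn) as [d [Hd _]].
  have Hd' : n = (m + d)%nat by lia.
  have H2 := Bp_large t m d ltac:(lra) Hm. rewrite -Hd' in H2.
  have H3 := Bp_small t m m ltac:(lra) (le_n m).
  have H4 := pow_fact m.
  have Hf : 0 < INR (fact m) by apply lt_0_INR, lt_O_fact.
  have Hpm : 0 < INR m ^ m by apply pow_lt.
  have HB1 := Bp_ge1 t m ltac:(lra).
  have H5 : Bp t m <= (2 * exp 1) ^ m.
  { apply (Rmult_le_reg_r (INR m ^ m)); [lra|].
    apply Rle_trans with (Bp t m * (exp 1 ^ m * INR (fact m))); [apply Rmult_le_compat_l; lra|].
    have -> : (2 * exp 1) ^ m * INR m ^ m = exp 1 ^ m * (2 * INR m) ^ m by rewrite !Rpow_mult_distr; ring.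
    have -> : Bp t m * (exp 1 ^ m * INR (fact m)) = exp 1 ^ m * (Bp t m * INR (fact m)) by ring.
    apply Rmult_le_compat_l; [apply pow_le; lra|]. exact H3. }
  have H6 : exp (t * (ln (INR n) - ln (INR m))) <= exp 1 ^ m.
  { rewrite exp_pow. apply exp_le'.
    have -> : ln (INR n) - ln (INR m) = ln (INR n / INR m).
    { unfold Rdiv. rewrite ln_mult; [|lra| apply Rinv_0_lt_compat; lra]. rewrite ln_Rinv; lra. }
    apply Rle_trans with (t * Lam); [apply Rmult_le_compat_l; lra|].
    unfold t. have -> : INR m / Lam * Lam = INR m by (field; lra). lra. }
  have H7 : Eh n m * t ^ m <= (2 * exp 1) ^ m * exp 1 ^ m.
  { apply Rle_trans with (1 := H1). apply Rle_trans with (1 := H2).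
    apply Rmult_le_compat; try lra. apply Rlt_le, exp_pos. }
  have -> : 2 * exp 1 * exp 1 / INR m * Lam = (2 * exp 1 * exp 1) * / t by (unfold t; field; lra).
  have Htp : 0 < t ^ m by apply pow_lt.
  have Hinv : (/ t) ^ m * t ^ m = 1.
  { rewrite -Rpow_mult_distr Rinv_l; [apply pow1| lra]. }
  rewrite Rpow_mult_distr (Rpow_mult_distr (2 * exp 1)).
  have Hi : 0 <= (/ t) ^ m by apply pow_le; left; apply Rinv_0_lt_compat.
  have HE := Eh_nonneg n m.
  nra.
Qed.

Lemma us_S0 a : us a.+1 0 = 0%nat.
Proof.
  elim: a => [|a IH]; first reflexivity.
  change (us a.+2 0) with (a.+1 * us a.+1 0)%nat. by rewrite IH muln0.
Qed.

Lemma us_Eh n m : INR (us n.+1 m.+1) = INR (n`!) * Eh n m.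
Proof.
  elim: n m => [|n IH] m.
  - case: m => [|m].
    + rewrite /=. simpl. lra.
    + simpl. lra.
  - change (us n.+2 m.+1) with (us n.+1 m + n.+1 * us n.+1 m.+1)%nat.
    rewrite factS -!multE -plusE plus_INR !mult_INR IH.
    case: m => [|m].
    + rewrite us_S0 Eh_S0 /=. lra.
    + rewrite IH Eh_SS. have := INR_Spos n. intros. field. lra.
Qed.

Theorem lemma4 :
  exists c C : R, 0 < c /\ c <= C /\
    forall m n : nat, (1 <= m)%nat -> (m <= n)%nat ->
      INR (n`!) * (c / INR m * Rmax 1 (ln (INR n / INR m))) ^ m
        <= abs_stirling1R n.+1 m.+1
      /\ abs_stirling1R n.+1 m.+1
        <= INR (n`!) * (C / INR m * Rmax 1 (ln (INR n / INR m))) ^ m.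
Proof.
  exists (1 / 2), (2 * exp 1 * exp 1).
  have He := exp_ineq1_le 1.
  split; [lra|]. split; [nra|].
  intros m n Hm Hmn. move/leP: Hm => Hm. move/leP: Hmn => Hmn.
  rewrite abs_us us_Eh. have Hf := pos_INR (n`!).
  split; apply Rmult_le_compat_l; auto; [apply lower_all| apply upper_all]; auto.
Qed.
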